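(* Let $N$ be an NFA and let $\sim$ be an equivalence relation on its vertex set that refines $\sim_{\mathrm{fwd}}$. Let $\bar N$ be the NFA obtained by grouping $N$ by $\sim$. Then $\bar N$ has a conflict if and only if $N$ has a conflict.
   Context: An NFA $N$ over a finite alphabet $A$, with action set $T$ and a relation $\mathrm{conf}\subseteq T\times T$, consists of a finite vertex set $V$, a starting vertex $v_s\in V$, an accepting action set $T_v\subseteq T$ for each $v\in V$, and a set of labeled edges $v\xrightarrow{\lambda}w$ with $v,w\in V$ and $\lambda\in A\cup\{\varepsilon\}$. For $U,W\subseteq T$, $\mathrm{conf}(U,W)$ means $\mathrm{conf}(a,b)$ for some $a\in U,b\in W$. For a vertex $u$ and a finite sequence $\tau=\tau_1\cdots\tau_r$ ($r\ge0$) with $\tau_i\in A\cup\{\varepsilon\}$, a vertex $w$ is reachable from $u$ on $\tau$ if there are vertices $u=v_1,\dots,v_{r+1}=w$ with an edge $v_i\xrightarrow{\tau_i}v_{i+1}$ for each $i$; $w$ is reachable from $u$ on a string $\zeta\in A^*$ if it is reachable on some sequence whose concatenation (reading $\varepsilon$ as the empty string) equals $\zeta$. A conflict in $N$ consists of two (not necessarily distinct) vertices $w,w'$ that are both reachable from $v_s$ on the same string $\zeta\in A^*$ and satisfy $\mathrm{conf}(T_w,T_{w'})$. Given an equivalence relation $\sim$ on $V$, the grouped NFA $\bar N$ has as vertices the equivalence classes, starting vertex the class of $v_s$, action sets $T_{\bar v}=\bigcup_{v\in\bar v}T_v$, and an edge $\bar v\xrightarrow{\lambda}\bar w$ iff some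 $v\in\bar v$, $w\in\bar w$ have an edge $v\xrightarrow{\lambda}w$ in $N$. Vertices $v_1,v_2$ of $N$ are forward-equivalent, $v_1\sim_{\mathrm{fwd}}v_2$, if for every finite sequence $\tau$ over $A\cup\{\varepsilon\}$, $v_1$ is reachable from $v_s$ on $\tau$ iff $v_2$ is reachable from $v_s$ on $\tau$. *)

(* Defs.v *)
From mathcomp Require Import all_boot.
Set Implicit Arguments. Unset Strict Implicit. Unset Printing Implicit Defensive.

(* An NFA over a finite alphabet A (finType), with vertex type V (finType),
   actions in T, is given by: a start vertex vs : V, accepting action sets
   acc : V -> T -> Prop (acc v t <-> t \in T_v), and labeled edges
   edge : V -> option A -> V -> Prop, where the label None stands for epsilon. *)

Fixpoint reach_seq {V A : Type} (edge : V -> option A -> V -> Prop)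
    (u : V) (tau : seq (option A)) (w : V) : Prop :=
  match tau with
  | [::] => u = w
  | l :: tau' => exists v, edge u l v /\ reach_seq edge v tau' w
  end.

Definition reach_str {V A : Type} (edge : V -> option A -> V -> Prop)
    (u : V) (zeta : seq A) (w : V) : Prop :=
  exists tau : seq (option A), pmap id tau = zeta /\ reach_seq edge u tau w.

Definition conf_sets {T : Type} (conf : T -> T -> Prop) (U W : T -> Prop) : Prop :=
  exists a b, U a /\ W b /\ conf a b.

Definition has_conflict {V A T : Type} (conf : T -> T -> Prop) (vs : V)
    (acc : V -> T -> Prop) (edge : V -> option A -> V -> Prop) : Prop :=
  exists (w w' : V) (zeta : seq A),
    reach_str edge vs zeta w /\ reach_str edge vs zeta w' /\
    conf_sets conf (acc w) (acc w').

Definition fwd_equiv {V A : Type} (vs : V) (edge : V -> option A -> V -> Prop)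
    (v1 v2 : V) : Prop :=
  forall tau : seq (option A), reach_seq edge vs tau v1 <-> reach_seq edge vs tau v2.

Definition eclass {V : finType} (e : rel V) (v : V) : {set V} := [set w | e v w].

Definition gvert {V : finType} (e : rel V) :=
  {C : {set V} | [exists v, C == eclass e v]}.

Lemma eclass_is_class {V : finType} (e : rel V) (v : V) :
  [exists u, eclass e v == eclass e u].
Proof. by apply/existsP; exists v. Qed.

Definition gclass_of {V : finType} (e : rel V) (v : V) : gvert e :=
  exist _ (eclass e v) (eclass_is_class e v).

Definition gstart {V : finType} (e : rel V) (vs : V) : gvert e := gclass_of e vs.

Definition gacc {V : finType} {T : Type} (e : rel V) (acc : V -> T -> Prop)
    (C : gvert e) (t : T) : Prop :=
  exists v, v \in sval C /\ acc v t.

Definition gedge {V A : finType} (e : rel V) (edge : V -> option A -> V -> Prop)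
    (C : gvert e) (l : option A) (D : gvert e) : Prop :=
  exists v w, [/\ v \in sval C, w \in sval D & edge v l w].

(* Main.v *)
Require Import Defs.
From mathcomp Require Import all_boot.

Lemma reach_seq_cat {V A : Type} (edge : V -> option A -> V -> Prop) s t u w :
  reach_seq edge u (s ++ t) w <-> exists m, reach_seq edge u s m /\ reach_seq edge m t w.
Proof.
elim: s u => [|l s IH] u /=.
  split; [by move=> H; exists u | by move=> [m [-> H]]].
split.
  move=> [v [Huv /IH [m [H1 H2]]]]; exists m; split=> //; by exists v.
move=> [m [[v [Huv H1]] H2]]; exists v; split=> //; apply/IH; by exists m.
Qed.

Theorem mainTheorem5 (V A : finType) (T : Type) (conf : T -> T -> Prop)
    (vs : V) (acc : V -> T -> Prop) (edge : V -> option A -> V -> Prop)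
    (e : rel V) :
  equivalence_rel e ->
  (forall v1 v2 : V, e v1 v2 -> fwd_equiv vs edge v1 v2) ->
  (has_conflict conf (gstart e vs) (@gacc V T e acc) (@gedge V A e edge) <->
   has_conflict conf vs acc edge).
Proof.
move=> He Hfwd.
have refl x : e x x by case: (He x x x).
have sym x y : e x y -> e y x.
  by move=> H; case: (He x y x) => _ /(_ H) <-.
have trans x y z : e x y -> e y z -> e x z.
  by move=> H1 H2; case: (He x y z) => _ /(_ H1) ->.
have memcls x v : (v \in eclass e x) = e x v by rewrite inE.
have key : forall tau sigma (C0 C : gvert e),
  (forall u, u \in sval C0 -> reach_seq edge vs sigma u) ->
  reach_seq (@gedge V A e edge) C0 tau C ->
  forall v, v \in sval C -> reach_seq edge vs (sigma ++ tau) v.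
  elim=> [|l tau IH] sigma C0 C H0 /=.
    by move=> <-; rewrite cats0.
  move=> [D [[u [w [Hu Hw Huw]]] HD]].
  rewrite -cat_rcons; apply: (IH _ D) => // w' Hw'.
  have Hrw : reach_seq edge vs (rcons sigma l) w.
    rewrite -cats1; apply/reach_seq_cat; exists u; split; first exact: H0.
    by exists w.
  move: Hw Hw'; case: D {HD} => S /= /existsP [x /eqP ->].
  rewrite !memcls => Hxw Hxw'.
  apply/(Hfwd w w' _ (rcons sigma l)) => //.
  exact: trans (sym _ _ Hxw) Hxw'.
have lift : forall tau C, reach_seq (@gedge V A e edge) (gstart e vs) tau C ->
  forall v, v \in sval C -> reach_seq edge vs tau v.
  move=> tau C H v Hv; rewrite -[tau]cat0s; apply: (key _ _ _ _ _ H) => //.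
  move=> u /=; rewrite memcls => Hu.
  by apply/(Hfwd vs u Hu [::]).
split.
  move=> [C [C' [zeta [[tau [Ht Hr]] [[tau' [Ht' Hr']] [a [b [[v [Hv Ha]] [[v' [Hv' Hb]] Hc]]]]]]]]].
  exists v, v', zeta; split; first by exists tau; split=> //; exact: lift Hr v Hv.
  split; first by exists tau'; split=> //; exact: lift Hr' v' Hv'.
  by exists a, b.
have proj : forall tau u w, reach_seq edge u tau w ->
  reach_seq (@gedge V A e edge) (gclass_of e u) tau (gclass_of e w).
  elim=> [|l tau IH] u w /=; first by move=> ->.
  move=> [m [Hum Hm]]; exists (gclass_of e m); split; last exact: IH.
  by exists u, m; split=> //=; rewrite memcls.
move=> [w [w' [zeta [[tau [Ht Hr]] [[tau' [Ht' Hr']] [a [b [Ha [Hb Hc]]]]]]]]].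
exists (gclass_of e w), (gclass_of e w'), zeta.
split; first by exists tau; split=> //; exact: proj.
split; first by exists tau'; split=> //; exact: proj.
exists a, b; split; first by exists w; rewrite /= memcls.
by split=> //; exists w'; rewrite /= memcls.
Qed.
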